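(* Let $\Sigma_1\subset(N_1)_{\mathbf R}$ and $\Sigma_2\subset(N_2)_{\mathbf R}$ be amply equivalent complete fans (via $\Psi$) with $\Sigma_1$ smooth, and let $\Phi:(N_1)_{\mathbf Q}\to(N_2)_{\mathbf Q}$ be the $\mathbf Q$-linear isomorphism with $\Phi(u_\rho)=u_{\Psi(\rho)}$ for all $\rho\in\Sigma_1(1)$. Then the restriction of $\Phi$ to $N_1$ factors through $N_2$ as an injective $\mathbf Z$-linear map $N_1\hookrightarrow N_2$. Moreover $\Sigma_2$ is simplicial, and the following are equivalent: (1) some maximal cone of $\Sigma_2$ is smooth; (2) the restriction of $\Phi$ to $N_1$ factors as a $\mathbf Z$-isomorphism $N_1\cong N_2$; (3) $\Sigma_2$ is smooth. In this case, the isomorphism $N_1\cong N_2$ induces a toric isomorphism $X_{\Sigma_1}\cong X_{\Sigma_2}$.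
   Context: For a fan: rays $\Sigma(1)$, primitive generators $u_\rho$; a primitive collection is $C\subset\Sigma(1)$ not contained in $\sigma(1)$ for any cone $\sigma$ while every proper subset is. Complete fans $\Sigma_1,\Sigma_2$ in lattices of equal rank are amply equivalent via a bijection $\Psi:\Sigma_1(1)\to\Sigma_2(1)$ if $\Psi$ maps primitive collections exactly onto primitive collections and, for all integers $(a_\rho)$, $\sum a_\rho u_\rho=0\iff\sum a_\rho u_{\Psi(\rho)}=0$; in that case a $\mathbf Q$-linear isomorphism $\Phi$ with $\Phi(u_\rho)=u_{\Psi(\rho)}$ exists, and its $\mathbf R$-extension maps cones of $\Sigma_1$ bijectively onto cones of $\Sigma_2$. A cone is smooth if its primitive ray generators form part of a $\mathbf Z$-basis of the lattice; a fan is smooth (resp. simplicial) if all its cones are smooth (resp. have linearly independent ray generators). *)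

(* Defs.v *)
(* fans encoded combinatorially (rays indexed by a finType,
   cones by their sets of rays), geometry over an arbitrary R : realType. *)
From HB Require Import structures.
From mathcomp Require Import all_boot all_order all_algebra.
From mathcomp Require Import reals.
Set Implicit Arguments. Unset Strict Implicit. Unset Printing Implicit Defensive.
Import Order.TTheory GRing.Theory Num.Theory.
Local Open Scope ring_scope.

Section Fans.
Variable R : realType.
Variable n : nat.

(* the lattice N = Z^n, as integer row vectors; N_R = R^n *)
Definition toR (v : 'rV[int]_n) : 'rV[R]_n := map_mx (fun z : int => z%:~R) v.

Definition dotR (m x : 'rV[R]_n) : R := \sum_(j < n) m ord0 j * x ord0 j.

Definition primitive_vec (v : 'rV[int]_n) : Prop :=
  v != 0 /\ forall (k : int) (w : 'rV[int]_n), v = k *: w -> `|k| = 1.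

Variable I : finType.
Variable u : I -> 'rV[int]_n.

Definition cone_of (S : {set I}) (x : 'rV[R]_n) : Prop :=
  exists a : I -> R, (forall i, 0 <= a i) /\ x = \sum_(i in S) a i *: toR (u i).

Definition strongly_convex (sigma : 'rV[R]_n -> Prop) : Prop :=
  forall x, sigma x -> sigma (- x) -> x = 0.

Definition is_face (sigma tau : 'rV[R]_n -> Prop) : Prop :=
  exists m : 'rV[R]_n, (forall x, sigma x -> 0 <= dotR m x) /\
    (forall x, tau x <-> (sigma x /\ dotR m x = 0)).

(* (I, u, C) is a fan in R^n whose set of rays is I (with primitive
   generators u) and whose cones are the cone_of S, S \in C, where S is
   exactly the set of rays of that cone. *)
Definition is_fan (C : {set {set I}}) : Prop :=
  (forall i, primitive_vec (u i)) /\
  [/\ (forall i, [set i] \in C),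
      (forall S, S \in C -> strongly_convex (cone_of S)),
      (forall S, S \in C -> forall i, (i \in S <-> is_face (cone_of S) (cone_of [set i]))),
      (forall S, S \in C -> forall tau, is_face (cone_of S) tau ->
          exists2 T, T \in C & forall x, cone_of T x <-> tau x) &
      (forall S T, S \in C -> T \in C ->
          is_face (cone_of S) (fun x => cone_of S x /\ cone_of T x))].

Definition complete_fan (C : {set {set I}}) : Prop :=
  is_fan C /\ forall x : 'rV[R]_n, exists2 S, S \in C & cone_of S x.

Definition primitive_collection (C : {set {set I}}) (P : {set I}) : Prop :=
  (forall S, S \in C -> ~ (P \subset S)) /\
  (forall Q : {set I}, Q \proper P -> exists2 S, S \in C & Q \subset S).

(* smooth cone: generators are part of a Z-basis of Z^n *)
Definition smooth_cone (S : {set I}) : Prop :=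
  exists (B : 'M[int]_n) (f : I -> 'I_n),
    [/\ B \in unitmx, {in S &, injective f} & forall i, i \in S -> row (f i) B = u i].

Definition simplicial_cone (S : {set I}) : Prop :=
  forall a : I -> R, \sum_(i in S) a i *: toR (u i) = 0 -> forall i, i \in S -> a i = 0.

Definition smooth_fan (C : {set {set I}}) : Prop :=
  forall S, S \in C -> smooth_cone S.

Definition simplicial_fan (C : {set {set I}}) : Prop :=
  forall S, S \in C -> simplicial_cone S.

Definition maximal_cone (C : {set {set I}}) (S : {set I}) : Prop :=
  S \in C /\ forall T : {set I}, T \in C -> ~ (S \proper T).

End Fans.

Definition amply_equivalent (R : realType) (n : nat)
  (I1 I2 : finType) (u1 : I1 -> 'rV[int]_n) (C1 : {set {set I1}})
  (u2 : I2 -> 'rV[int]_n) (C2 : {set {set I2}}) (Psi : I1 -> I2) : Prop :=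
  [/\ complete_fan R u1 C1, complete_fan R u2 C2, bijective Psi,
      (forall P : {set I1},
          (primitive_collection C1 P <-> primitive_collection C2 (Psi @: P))) &
      (forall a : I1 -> int,
          (\sum_i a i *: u1 i = 0 <-> \sum_i a i *: u2 (Psi i) = 0))].

Definition intmx_rat (n : nat) (A : 'M[int]_n) : 'M[rat]_n :=
  map_mx (fun z : int => z%:~R) A.

(* The real-linear map x |-> x *m A (A integer) maps the cones of the first fan
   bijectively onto the cones of the second: this is exactly a lattice
   isomorphism inducing a toric isomorphism X_Sigma1 ~= X_Sigma2. *)
Definition induces_toric_iso (R : realType) (n : nat)
  (I1 I2 : finType) (u1 : I1 -> 'rV[int]_n) (C1 : {set {set I1}})
  (u2 : I2 -> 'rV[int]_n) (C2 : {set {set I2}}) (A : 'M[int]_n) : Prop :=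
  let AR : 'M[R]_n := map_mx (fun z : int => z%:~R) A in
  [/\ A \in unitmx,
      (forall S, S \in C1 -> exists2 T, T \in C2 &
          forall y, cone_of u2 T y <-> exists2 x, cone_of u1 S x & y = x *m AR) &
      (forall T, T \in C2 -> exists2 S, S \in C1 &
          forall y, cone_of u2 T y <-> exists2 x, cone_of u1 S x & y = x *m AR)].

(* Main.v *)
Require Import Defs.
From HB Require Import structures.
From mathcomp Require Import all_boot all_order all_algebra.
From mathcomp Require Import reals.
From Stdlib Require Import Classical.
From mathcomp Require Import ring lra.
Import Order.TTheory GRing.Theory Num.Theory.
Local Open Scope ring_scope.

Module Helpers.
Set Implicit Arguments. Unset Strict Implicit. Unset Printing Implicit Defensive.

Section Lin.
Variable R : realType.
Variable n : nat.
Local Notation toR := (@toR R n).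
Definition BR (B : 'M[int]_n) : 'M[R]_n := map_mx (fun z : int => z%:~R) B.

Lemma toR_mul x B : toR (x *m B) = toR x *m BR B.
Proof. exact: map_mxM. Qed.

Lemma toR_inj : injective toR.
Proof.
move=> x y h; apply/matrixP => i j; move/matrixP: h => /(_ i j); rewrite !mxE.
exact: intr_inj.
Qed.

Lemma BR_mulinv B : B \in unitmx -> BR B *m BR (invmx B) = 1%:M.
Proof. by move=> uB; rewrite /BR -map_mxM mulmxV // map_mx1. Qed.

Lemma toR_row k B : toR (row k B) = row k (BR B).
Proof. exact: map_row. Qed.

Lemma toR_lin (I : finType) (S : {set I}) (z : I -> int) (w : I -> 'rV[int]_n) :
  toR (\sum_(i in S) z i *: w i) = \sum_(i in S) (z i)%:~R *: toR (w i).
Proof.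
rewrite /Defs.toR (big_morph _ (@map_mxD _ _ _ 1 n) (map_mx0 _ _ _)).
by apply: eq_bigr => i _; rewrite map_mxZ.
Qed.

Lemma dotR_mx (m x : 'rV[R]_n) : dotR m x = (x *m m^T) 0 0.
Proof. by rewrite /dotR !mxE; apply: eq_bigr => j _; rewrite !mxE mulrC. Qed.

Lemma dotR_sum (I : finType) (S : {set I}) (a : I -> R) (w : I -> 'rV[R]_n) m :
  dotR m (\sum_(i in S) a i *: w i) = \sum_(i in S) a i * dotR m (w i).
Proof.
rewrite dotR_mx mulmx_suml summxE; apply: eq_bigr => i _.
by rewrite -scalemxAl mxE dotR_mx.
Qed.

Variable I : finType.
Variable u : I -> 'rV[int]_n.

Definition cvec (f : I -> 'I_n) (S : {set I}) (a : I -> R) : 'rV[R]_n :=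
  \sum_(i in S) a i *: delta_mx 0 (f i).

Lemma cvec_mul (B : 'M[int]_n) (f : I -> 'I_n) (S : {set I}) (a : I -> R) : (forall i, i \in S -> row (f i) B = u i) ->
  \sum_(i in S) a i *: toR (u i) = cvec f S a *m BR B.
Proof.
move=> h; rewrite /cvec mulmx_suml; apply: eq_bigr => i iS.
by rewrite -scalemxAl -rowE -(h i iS) toR_row.
Qed.

Lemma cvecE (f : I -> 'I_n) (S : {set I}) (a : I -> R) j : {in S &, injective f} -> j \in S -> cvec f S a 0 (f j) = a j.
Proof.
move=> finj jS; rewrite /cvec summxE (bigD1 j) //= big1 ?addr0.
  by rewrite !mxE !eqxx mulr1.
move=> i /andP [iS ij]; rewrite !mxE eqxx /=.
case: eqP => [e|]; last by rewrite mulr0.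
by move: (finj _ _ jS iS e) => ji; rewrite ji eqxx in ij.
Qed.

Lemma cvecE0 (f : I -> 'I_n) (S : {set I}) (a : I -> R) k : (forall i, i \in S -> f i != k) -> cvec f S a 0 k = 0.
Proof.
move=> h; rewrite /cvec summxE big1 // => i iS; rewrite !mxE eqxx /=.
by rewrite eq_sym (negbTE (h i iS)) mulr0.
Qed.

Lemma smooth_simplicial (S : {set I}) : smooth_cone u S -> simplicial_cone R u S.
Proof.
case=> B [f [uB finj hrow]] a h i iS.
rewrite (cvec_mul _ hrow) in h.
have c0 : cvec f S a = 0.
  by rewrite -(mulmx1 (cvec f S a)) -(BR_mulinv uB) mulmxA h mul0mx.
by rewrite -(cvecE a finj iS) c0 mxE.
Qed.

Lemma smooth_sub (S P : {set I}) : P \subset S -> smooth_cone u S -> smooth_cone u P.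
Proof.
move=> /subsetP PS [B [f [uB finj hrow]]]; exists B, f; split => //.
  by move=> x y /PS xS /PS yS; apply: finj.
by move=> i /PS; apply: hrow.
Qed.

Lemma cone_intro (S : {set I}) (a : I -> R) x : (forall i, i \in S -> 0 <= a i) ->
  x = \sum_(i in S) a i *: toR (u i) -> cone_of u S x.
Proof.
move=> a0 hx; exists (fun i => if i \in S then a i else 0); split.
  by move=> i; case: ifP => // /a0.
by rewrite hx; apply: eq_bigr => i ->.
Qed.

Lemma cone_gen (S : {set I}) t : t \in S -> cone_of u S (toR (u t)).
Proof.
move=> tS; apply: (@cone_intro _ (fun i => if i == t then 1 else 0)).
  by move=> i _; case: eqP.
rewrite (bigD1 t) //= eqxx scale1r big1 ?addr0 // => i /andP [_ /negbTE ->].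
by rewrite scale0r.
Qed.

Lemma smooth_int (S : {set I}) x : smooth_cone u S -> cone_of u S (toR x) ->
  exists z : I -> int, x = \sum_(i in S) z i *: u i.
Proof.
move=> [B [f [uB finj hrow]]] [a [a0 hx]].
rewrite (cvec_mul _ hrow) in hx.
have hc : cvec f S a = toR (x *m invmx B).
  by rewrite toR_mul hx -mulmxA BR_mulinv // mulmx1.
exists (fun i => (x *m invmx B) 0 (f i)); apply: toR_inj.
rewrite toR_lin (cvec_mul _ hrow) hx; congr (_ *m _).
apply: eq_bigr => i iS; congr (_ *: _).
by rewrite -(cvecE a finj iS) hc mxE.
Qed.

Lemma sum_sub (V : zmodType) (S P : {set I}) (F : I -> V) : P \subset S ->
  \sum_(i in S) (if i \in P then F i else 0) = \sum_(i in P) F i.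
Proof.
move=> /subsetP PS; rewrite -big_mkcondr; apply: eq_bigl => i.
by case iP: (i \in P); rewrite ?andbT ?andbF ?PS.
Qed.

Lemma face_smooth (S P : {set I}) : smooth_cone u S -> P \subset S ->
  is_face (@cone_of R n I u S) (@cone_of R n I u P).
Proof.
move=> [B [f [uB finj hrow]]] PS.
pose e : 'rV[R]_n := \row_k (if [exists i in S :\: P, f i == k] then 1 else 0).
pose m : 'rV[R]_n := (BR (invmx B) *m e^T)^T.
have em i : i \in S -> dotR m (toR (u i)) = if i \in P then 0 else 1.
  move=> iS; rewrite dotR_mx trmxK -(hrow i iS) toR_row rowE -mulmxA.
  rewrite (mulmxA (BR B)) BR_mulinv // mul1mx -rowE !mxE.
  case iP: (i \in P).
    case: existsP => // [[j /andP [/setDP [jS jP] /eqP fj]]].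
    by move: (finj _ _ jS iS fj) => ji; rewrite ji iP in jP.
  case: existsP => // [[]]; exists i; by rewrite inE iP iS eqxx.
have e01 i : i \in S -> 0 <= dotR m (toR (u i)).
  by move=> iS; rewrite em //; case: (i \in P).
exists m; split.
  move=> x [a [a0 ->]]; rewrite dotR_sum; apply: sumr_ge0 => i iS.
  by apply: mulr_ge0 => //; apply: e01.
move=> x; split.
  move=> [a [a0 hx]]; split.
    apply: (@cone_intro S (fun i => if i \in P then a i else 0)).
      by move=> i _; case: ifP.
    rewrite hx -(sum_sub _ PS); apply: eq_bigr => i _.
    by case: ifP; rewrite ?scale0r.
  rewrite hx dotR_sum big1 // => i iP.
  have iS : i \in S := subsetP PS i iP.
  by rewrite em // iP mulr0.
move=> [[a [a0 hx]] hd].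
rewrite hx dotR_sum in hd.
have hz := psumr_eq0P (fun i iS => mulr_ge0 (a0 i) (e01 i iS)) hd.
apply: (@cone_intro P a); first by move=> i _.
rewrite hx -(sum_sub _ PS); apply: eq_bigr => i iS.
case iP: (i \in P) => //.
by move: (hz i iS); rewrite em // iP mulr1 => ->; rewrite scale0r.
Qed.

End Lin.

Section Geo.
Variable R : realType.
Variable n : nat.
Variable I : finType.
Variable u : I -> 'rV[int]_n.
Variable C : {set {set I}}.
Hypothesis hC : complete_fan R u C.
Hypothesis hsimp : simplicial_fan R u C.
Local Notation w i := (@toR R n (u i)).

Lemma unique_coef (S : {set I}) (a b : I -> R) : simplicial_cone R u S ->
  \sum_(i in S) a i *: w i = \sum_(i in S) b i *: w i -> forall i, i \in S -> a i = b i.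
Proof.
move=> hs h i iS; apply/eqP; rewrite -subr_eq0; apply/eqP.
apply: (hs (fun i => a i - b i)) => //.
by rewrite (eq_bigr (fun i => a i *: w i - b i *: w i)) ?sumrB ?h ?subrr // => j _; rewrite scalerBl.
Qed.

Lemma ray_in (S : {set I}) t : S \in C -> cone_of u S (w t) -> t \in S.
Proof.
case: hC => [[_ [h1 h2 h3 h4 h5]] _] hS ht.
apply/(h3 S hS t).
have [m [hm hiff]] := h5 S [set t] hS (h1 t).
exists m; split => // x; split.
  move=> hx; apply: (hiff x).1; split => //.
  case: hx => [a [a0 ->]]; rewrite big_set1.
  case: ht => [b [b0 ->]].
  exists (fun j => a t * b j); split; first by move=> j; apply: mulr_ge0.
  by rewrite scaler_sumr; apply: eq_bigr => j _; rewrite scalerA.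
by move=> hx; exact: ((hiff x).2 hx).2.
Qed.

Lemma max_full (T : {set I}) : maximal_cone C T ->
  forall v : 'rV[R]_n, exists a : I -> R, v = \sum_(i in T) a i *: w i.
Proof.
case: (hC) => [[_ [h1 h2 h3 h4 h5]] hcov].
move=> [hT hmax] v; apply: NNPP => hv.
pose x := \sum_(i in T) (1 : R) *: w i.
pose y (m : nat) := x + (m.+1%:R : R)^-1 *: v.
have [S' [hS' hinf]] : exists S', S' \in C /\
    forall N, exists m, (N <= m)%N /\ cone_of u S' (y m).
  apply: NNPP => H.
  have hN : forall S' : {set I}, exists N : nat,
      forall m, (N <= m)%N -> S' \in C -> ~ cone_of u S' (y m).
    move=> S'; apply: NNPP => H2; apply: H; exists S'; split.
      apply: NNPP => hC'; apply: H2; exists 0%N => m _ hh; exfalso; exact: hC' hh.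
    move=> N; apply: NNPP => H3; apply: H2; exists N => m hm _ hc; apply: H3.
    by exists m; split.
  have [Nf hNf] := fin_all_exists hN.
  pose N := (\max_(S' : {set I}) Nf S')%N.
  have [S' hS' hc] := hcov (y N).
  exact: (hNf S' N (leq_bigmax S') hS' hc).
have hsS' := hsimp hS'.
have [m1 [_ [c1 [c10 hc1]]]] := hinf 0%N.
have [m2 [lt12 [c2 [c20 hc2]]]] := hinf m1.+1.
pose t1 := (m1.+1%:R : R)^-1; pose t2 := (m2.+1%:R : R)^-1.
have t12 : t1 - t2 != 0.
  apply/eqP => h; have : t1 = t2 by apply/eqP; rewrite -subr_eq0 h.
  move/invr_inj/eqP; rewrite eqr_nat eqSS => /eqP e.
  by rewrite e ltnn in lt12.
pose be i := (c1 i - c2 i) / (t1 - t2).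
pose al i := c1 i - t1 * be i.
have hvb : v = \sum_(i in S') be i *: w i.
  have e1 : \sum_(i in S') be i *: w i =
      (t1 - t2)^-1 *: (\sum_(i in S') c1 i *: w i - \sum_(i in S') c2 i *: w i).
    rewrite scalerBr !scaler_sumr -sumrB; apply: eq_bigr => i _.
    rewrite !scalerA -scalerBl /be; congr (_ *: _).
    by rewrite mulrC mulrBr.
  rewrite e1 -hc1 -hc2 /y opprD addrACA subrr add0r -scalerBl scalerA.
  by rewrite mulVf // scale1r.
have hxa : x = \sum_(i in S') al i *: w i.
  have e1 : \sum_(i in S') al i *: w i =
      \sum_(i in S') c1 i *: w i - t1 *: \sum_(i in S') be i *: w i.
    rewrite scaler_sumr -sumrB; apply: eq_bigr => i _.
    by rewrite scalerA -scalerBl.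
  by rewrite e1 -hvb -hc1 /y addrK.
have coef m (c : I -> R) : cone_of u S' (y m) -> (forall i, 0 <= c i) ->
    y m = \sum_(i in S') c i *: w i ->
    forall i, i \in S' -> c i = al i + (m.+1%:R)^-1 * be i.
  move=> _ _ hc; apply: (unique_coef hsS').
  rewrite -hc /y hxa hvb scaler_sumr -big_split; apply: eq_bigr => i _.
  rewrite [RHS]scalerDl scalerA; reflexivity.
have al0 i : i \in S' -> 0 <= al i.
  move=> iS; rewrite leNgt; apply/negP => hneg.
  have hpos : 0 <= `|be i| / - al i.
    by apply: divr_ge0 => //; rewrite oppr_ge0 ltW.
  have hN := archi_boundP hpos.
  have [m [hm [c [c0 hc]]]] := hinf (Num.bound (`|be i| / - al i)).
  have hci := coef m c (ex_intro _ c (conj c0 hc)) c0 hc i iS.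
  have hM : ((Num.bound (`|be i| / - al i))%:R : R) <= m.+1%:R.
    by rewrite ler_nat ltnW // ltnS.
  have hb : `|be i| < m.+1%:R * (- al i).
    rewrite -ltr_pdivrMr; last by rewrite oppr_gt0.
    exact: (lt_le_trans hN hM).
  have hbb : be i <= `|be i| := ler_norm _.
  have hmp : (0 : R) < m.+1%:R by rewrite ltr0n.
  have hinv : (m.+1%:R : R)^-1 * m.+1%:R = 1 by rewrite mulVf // gt_eqF.
  have hip : (0 : R) < (m.+1%:R)^-1 by rewrite invr_gt0.
  move: (c0 i); rewrite hci.
  set t := (m.+1%:R : R)^-1 in hinv hip *.
  set M := (m.+1%:R : R) in hb hinv hmp *.
  nra.
have xS' : cone_of u S' x by apply: (cone_intro al0 hxa).
have xT : cone_of u T x by apply: (@cone_intro R n I u T (fun _ => 1)) => // i _; exact: ler01.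
have [m0 [hm0 hiff]] := h5 T S' hT hS'.
have d0 : dotR m0 x = 0 := ((hiff x).1 (conj xT xS')).2.
rewrite /x dotR_sum in d0.
have TS : T \subset S'.
  apply/subsetP => t tT.
  have hz := psumr_eq0P (fun i iT => mulr_ge0 ler01 (hm0 _ (@cone_gen R n I u _ _ iT))) d0 tT.
  rewrite mul1r in hz.
  apply: ray_in => //.
  exact: ((hiff (w t)).2 (conj (@cone_gen R n I u _ _ tT) hz)).2.
apply: (hmax S' hS'); rewrite properE TS /=; apply/negP => ST.
apply: hv; exists (fun i => if i \in S' then be i else 0).
rewrite hvb -(sum_sub _ ST); apply: eq_bigr => i _.
by case: ifP; rewrite ?scale0r.
Qed.

Lemma max_smooth (T : {set I}) (B : 'M[int]_n) (f : I -> 'I_n) :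
  maximal_cone C T -> B \in unitmx -> {in T &, injective f} ->
  (forall i, i \in T -> row (f i) B = u i) ->
  forall k, exists t, t \in T /\ f t = k.
Proof.
move=> hmax uB finj hrow k; apply: NNPP => H.
have [a ha] := max_full hmax (row k (BR R B)).
rewrite (cvec_mul _ hrow) rowE in ha.
have : delta_mx 0 k = @cvec R n I f T a.
  by rewrite -(mulmx1 (delta_mx 0 k)) -(BR_mulinv R uB) mulmxA ha -mulmxA BR_mulinv // mulmx1.
move/matrixP/(_ 0 k); rewrite cvecE0.
  by rewrite !mxE !eqxx /= => /eqP; rewrite oner_eq0.
by move=> i iT; apply/eqP => e; apply: H; exists i.
Qed.

End Geo.

Lemma exists_prim (I : finType) (C : {set {set I}}) (P : {set I}) :
  (forall S, S \in C -> ~ P \subset S) ->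
  exists2 Q : {set I}, Q \subset P & primitive_collection C Q.
Proof.
have key : forall P : {set I},
    (forall Q : {set I}, Q \proper P -> (forall S, S \in C -> ~ Q \subset S) ->
       exists2 Q' : {set I}, Q' \subset Q & primitive_collection C Q') ->
    (forall S, S \in C -> ~ P \subset S) ->
    exists2 Q : {set I}, Q \subset P & primitive_collection C Q.
  move=> P0 IH hP.
  case: (classic (forall Q : {set I}, Q \proper P0 -> exists2 S : {set I}, S \in C & Q \subset S)) => H.
    by exists P0 => //; split.
  have [Q hQ] := not_all_ex_not _ _ H.
  have [hQP hQ2] := imply_to_and _ _ hQ.
  have [Q' h1 h2] := IH Q hQP (fun S hS hsub => hQ2 (ex_intro2 _ _ S hS hsub)).
  by exists Q' => //; apply: subset_trans h1 (proper_sub hQP).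
move: {2}#|P| (leqnn #|P|) => k; elim: k P => [|k IH] P hk.
  apply: key => Q hQ; have := proper_card hQ; by rewrite ltnNge (leq_trans hk).
apply: key => Q hQ; apply: IH; have := proper_card hQ => h.
by rewrite -ltnS (leq_trans h hk).
Qed.

Section Ample.
Variables I1 I2 : finType.
Variables (C1 : {set {set I1}}) (C2 : {set {set I2}}) (Psi : I1 -> I2).
Hypothesis hprim : forall P : {set I1},
  (primitive_collection C1 P <-> primitive_collection C2 (Psi @: P)).
Hypothesis hbij : bijective Psi.

Lemma imset_pre (T : {set I2}) : Psi @: (Psi @^-1: T) = T.
Proof.
case: hbij => g gK Kg; apply/setP => t; apply/imsetP/idP.
  by move=> [i]; rewrite inE => hi ->.
by move=> tT; exists (g t); rewrite ?inE Kg.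
Qed.

Lemma pre_cone T : T \in C2 -> exists2 S, S \in C1 & Psi @^-1: T \subset S.
Proof.
move=> hT; apply: NNPP => H.
have hP : forall S, S \in C1 -> ~ (Psi @^-1: T) \subset S :=
  fun S hS hsub => H (ex_intro2 _ _ S hS hsub).
have [Q hQP hQ] := exists_prim hP.
have [hn _] := (hprim Q).1 hQ.
apply: (hn T hT); apply/subsetP => t /imsetP [i iQ ->].
by have := subsetP hQP i iQ; rewrite inE.
Qed.

Lemma img_cone S : S \in C1 -> exists2 T, T \in C2 & Psi @: S \subset T.
Proof.
move=> hS; apply: NNPP => H.
have hP : forall T, T \in C2 -> ~ (Psi @: S) \subset T :=
  fun T hT hsub => H (ex_intro2 _ _ T hT hsub).
have [Q' hQP hQ] := exists_prim hP.
rewrite -(imset_pre Q') in hQ.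
have [hn _] := (hprim _).2 hQ.
apply: (hn S hS); apply/subsetP => i; rewrite inE => /(subsetP hQP) /imsetP [j jS e].
case: hbij => g gK _.
by rewrite -(gK i) e gK.
Qed.

End Ample.
End Helpers.
Import Helpers.

Theorem corollary5p26 (R : realType) (n : nat) (I1 I2 : finType)
  (u1 : I1 -> 'rV[int]_n) (C1 : {set {set I1}})
  (u2 : I2 -> 'rV[int]_n) (C2 : {set {set I2}})
  (Psi : I1 -> I2) (Phi : 'M[rat]_n) :
  amply_equivalent R u1 C1 u2 C2 Psi ->
  smooth_fan u1 C1 ->
  Phi \in unitmx ->
  (forall i, map_mx (fun z : int => z%:~R) (u1 i) *m Phi
             = map_mx (fun z : int => z%:~R) (u2 (Psi i))) ->
  [/\ exists A : 'M[int]_n, intmx_rat A = Phi /\ injective (fun x : 'rV[int]_n => x *m A),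
      simplicial_fan R u2 C2,
      ((exists S, maximal_cone C2 S /\ smooth_cone u2 S) <->
         (exists A : 'M[int]_n, A \in unitmx /\ intmx_rat A = Phi)),
      ((exists A : 'M[int]_n, A \in unitmx /\ intmx_rat A = Phi) <->
         smooth_fan u2 C2) &
      (forall A : 'M[int]_n, A \in unitmx -> intmx_rat A = Phi ->
         induces_toric_iso R u1 C1 u2 C2 A)].
Proof.
move=> [hc1 hc2 hbij hprim hrel] hsm1 uPhi hPhi.
have [g gK Kg] := hbij.
have Psi_inj : injective Psi := can_inj gK.
have hrow : forall k : 'I_n, exists w : 'rV[int]_n,
    row k Phi = map_mx (fun z : int => z%:~R) w.
  move=> k; have [S hS hx] := (proj2 hc1) (toR R (delta_mx 0 k)).
  have [z hz] := smooth_int (hsm1 S hS) hx.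
  exists (\sum_(i in S) z i *: u2 (Psi i)).
  rewrite rowE.
  have -> : (delta_mx 0 k : 'rV[rat]_n) =
      map_mx (fun z : int => z%:~R) (delta_mx 0 k) by rewrite map_delta_mx.
  rewrite hz !(big_morph _ (@map_mxD _ _ _ 1 n) (map_mx0 _ _ _)) mulmx_suml.
  by apply: eq_bigr => i _; rewrite !map_mxZ -scalemxAl hPhi.
have [W hW] := fin_all_exists hrow.
pose A := \matrix_(k < n) W k.
have hA : intmx_rat A = Phi.
  by apply/row_matrixP => k; rewrite /intmx_rat -map_row rowK hW.
have hAu : forall A', intmx_rat A' = Phi -> forall i, u1 i *m A' = u2 (Psi i).
  move=> A' hA' i; apply/matrixP => a b; move: (hPhi i) => /matrixP /(_ a b).
  by rewrite -hA' /intmx_rat -map_mxM !mxE => /intr_inj.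
have uAR : forall A', intmx_rat A' = Phi -> BR R A' \in unitmx.
  move=> A' hA'; move: uPhi; rewrite -hA' !unitmxE /intmx_rat /BR !det_map_mx.
  by rewrite !unitfE !intr_eq0.
have hw : forall A', intmx_rat A' = Phi ->
    forall i, toR R (u2 (Psi i)) = toR R (u1 i) *m BR R A'.
  by move=> A' hA' i; rewrite -toR_mul hAu.
have part1 : exists A : 'M[int]_n, intmx_rat A = Phi /\
    injective (fun x : 'rV[int]_n => x *m A).
  exists A; split => // x y /= hxy; apply: (@toR_inj R n).
  rewrite -(mulmxK (uAR _ hA) (toR R x)) -(mulmxK (uAR _ hA) (toR R y)).
  by rewrite -!toR_mul hxy.
have simp2 : simplicial_fan R u2 C2.
  move=> T hT a ha t tT.
  have [S hS hsub] := pre_cone hprim hT.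
  have hsP := @smooth_simplicial R _ _ _ _ (smooth_sub hsub (hsm1 S hS)).
  rewrite -(imset_pre hbij T) (big_imset _ (in2W Psi_inj)) /= in ha.
  have e : (\sum_(i in Psi @^-1: T) a (Psi i) *: toR R (u1 i)) *m BR R A = 0.
    rewrite mulmx_suml; apply: etrans ha; apply: eq_bigr => i _.
    by rewrite -scalemxAl (hw _ hA).
  have e2 : \sum_(i in Psi @^-1: T) a (Psi i) *: toR R (u1 i) = 0.
    by rewrite -(mulmxK (uAR _ hA) (\sum_(i in _) _)) e mul0mx.
  have := hsP (fun i => a (Psi i)) e2 (g t); rewrite Kg; apply.
  by rewrite inE Kg.
have h23 : forall A', A' \in unitmx -> intmx_rat A' = Phi -> smooth_fan u2 C2.
  move=> A' uA' hA' T hT.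
  have [S hS hsub] := pre_cone hprim hT.
  have [B [f [uB finj hrowB]]] := hsm1 S hS.
  have gS : forall t, t \in T -> g t \in S.
    by move=> t tT; apply: (subsetP hsub); rewrite inE Kg.
  exists (B *m A'), (fun t => f (g t)); split.
  - by rewrite unitmx_mul uB.
  - move=> t1 t2 h1 h2 /= e.
    by rewrite -(Kg t1) (finj _ _ (gS _ h1) (gS _ h2) e) Kg.
  - by move=> t tT /=; rewrite row_mul hrowB ?gS // hAu // Kg.
have h31 : smooth_fan u2 C2 -> exists S, maximal_cone C2 S /\ smooth_cone u2 S.
  move=> hsm2.
  have [S0 hS0 _] := (proj2 hc2) 0.
  case: (@arg_maxnP _ S0 (fun T => T \in C2) (fun T => #|T|) hS0) => T hT hTmax.
  exists T; split; last exact: hsm2.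
  split => // T' hT' hprop.
  by have := hTmax T' hT'; rewrite /= leqNgt (proper_card hprop).
have h12 : (exists S, maximal_cone C2 S /\ smooth_cone u2 S) ->
    exists A', A' \in unitmx /\ intmx_rat A' = Phi.
  move=> [T [hmax [B [f [uB finj hrowT]]]]].
  have hk := max_smooth hc2 simp2 hmax uB finj hrowT.
  have [tk htk] := fin_all_exists hk.
  pose M1 := \matrix_(k < n) u1 (g (tk k)).
  have eB : B = M1 *m A.
    apply/row_matrixP => k; rewrite row_mul rowK hAu // Kg.
    by have [tkT fk] := htk k; rewrite -{1}fk hrowT.
  exists A; split => //.
  move: uB; rewrite !unitmxE eB det_mulmx unitrM => /andP [].
  by [].
split => //.
- split; first exact: h12.
  by move=> [A' [uA' hA']]; apply: h31; apply: (h23 A').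
- split; first by move=> [A' [uA' hA']]; apply: (h23 A').
  by move=> hs; apply: h12; apply: h31.
move=> A' uA' hA'.
have hsm2 := h23 A' uA' hA'.
have cimg : forall (P : {set I1}) y, cone_of u2 (Psi @: P) y <->
    exists2 x, cone_of u1 P x & y = x *m BR R A'.
  move=> P y; split.
    move=> [a [a0 ->]]; rewrite (big_imset _ (in2W Psi_inj)) /=.
    exists (\sum_(i in P) a (Psi i) *: toR R (u1 i)).
      by apply: (@cone_intro R n I1 u1 P (fun i => a (Psi i))).
    by rewrite mulmx_suml; apply: eq_bigr => i _; rewrite -scalemxAl (hw _ hA').
  move=> [x [a [a0 ->]] ->].
  apply: (@cone_intro R n I2 u2 _ (fun t => a (g t))) => [t _|]; first exact: a0.
  rewrite (big_imset _ (in2W Psi_inj)) /= mulmx_suml; apply: eq_bigr => i _.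
  by rewrite gK -scalemxAl (hw _ hA').
have [[_ [_ _ _ h41 _]] _] := hc1.
have [[_ [_ _ _ h42 _]] _] := hc2.
rewrite /induces_toric_iso /=; split => //.
  move=> S hS; have [T' hT' hsub] := img_cone hprim hbij hS.
  have hf := face_smooth R (hsm2 T' hT') hsub.
  have [T'' hT'' hiff] := h42 T' hT' _ hf.
  exists T'' => // y; split => [/hiff /cimg | /cimg /hiff] //.
move=> T hT; have [S hS hsub] := pre_cone hprim hT.
have hf := face_smooth R (hsm1 S hS) hsub.
have [S'' hS'' hiff] := h41 S hS _ hf.
exists S'' => // y; rewrite -{1}(imset_pre hbij T).
split.
  by move=> /cimg [x hx ->]; exists x => //; apply/hiff.
by move=> [x /hiff hx ->]; apply/cimg; exists x.
Qed.
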